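(* For every integer $d\ge 2$, the uniform probability measure $\mu^{\{0,1\}}_{n,d}$ on the set of $1$-Lipschitz functions $f\colon V(\mathbb{T}^n_d)\to\mathbb{Z}$ taking values in $\{0,1\}$ at every vertex at distance exactly $n$ from the root converges (in the local weak sense) as $n\to\infty$.
   Context: A $d$-ary tree $\mathbb{T}_d$ is an infinite tree with a distinguished root vertex $\rho$ of degree $d$, all other vertices having degree $d+1$. $\mathbb{T}^n_d$ is the finite subtree induced by the vertices at graph distance at most $n$ from $\rho$; its leaves are the vertices at distance exactly $n$. A $1$-Lipschitz function is an integer-valued function $f$ with $|f(u)-f(v)|\le 1$ for all adjacent $u,v$. Local weak convergence means: for every fixed $r\ge0$, the law of the restriction of $f$ to the vertices within distance $r$ of $\rho$ converges as $n\to\infty$ to a probability measure. *)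

(* Defs.v *)
From HB Require Import structures.
From mathcomp Require Import all_boot all_order all_algebra.
From mathcomp Require Import finmap.
From mathcomp Require Import all_classical all_reals all_analysis.
Unset Printing Implicit Defensive.
Import Order.TTheory GRing.Theory Num.Theory.
Local Open Scope classical_set_scope.
Local Open Scope ring_scope.

(* Vertices of the d-ary tree T_d: words over 'I_d.  The root rho is [::],
   the children of a vertex s are the words rcons s i (i : 'I_d), and the
   graph distance of s from the root is size s.  T^n_d consists of the words
   of size <= n; its edges are {s, rcons s i} with size s < n; its leaves are
   the words of size exactly n. *)

(* A configuration on T^n_d is a function seq 'I_d -> int which we normalize
   to be 0 outside the vertex set of T^n_d. *)
Definition supported_on (d n : nat) (f : seq 'I_d -> int) : Prop :=
  forall s, (n < size s)%N -> f s = 0.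

Definition lipschitz1 (d n : nat) (f : seq 'I_d -> int) : Prop :=
  forall (s : seq 'I_d) (i : 'I_d), (size s < n)%N -> `|f (rcons s i) - f s| <= 1.

Definition adm01 (d n : nat) : set (seq 'I_d -> int) :=
  [set f | [/\ supported_on d n f, lipschitz1 d n f &
             forall s : seq 'I_d, size s = n -> (f s = 0 \/ f s = 1)]].

Definition restr (d r : nat) (f : seq 'I_d -> int) : seq 'I_d -> int :=
  fun s => if (size s <= r)%N then f s else 0.

Definition cnt {T : choiceType} (A : set T) : nat := #|` fset_set A|%fset.

Definition law (R : realType) (d n r : nat) (g : seq 'I_d -> int) : R :=
  (cnt (adm01 d n `&` [set f | restr d r f = g]))%:R / (cnt (adm01 d n))%:R.

(* Main.v *)
Require Import Defs.
From HB Require Import structures.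
From mathcomp Require Import all_boot all_order all_algebra.
From mathcomp Require Import finmap.
From mathcomp Require Import all_classical all_reals all_analysis.
Import Order.TTheory GRing.Theory Num.Theory numFieldNormedType.Exports.
From mathcomp Require Import lra ring zify.

Local Open Scope classical_set_scope.

Lemma cnt_setU_disj {T : choiceType} (A B : set T) :
  finite_set A -> finite_set B -> A `&` B = set0 ->
  cnt (A `|` B) = (cnt A + cnt B)%N.
Proof.
move=> fA fB AB; rewrite /cnt fset_setU // cardfsU -fset_setI // AB fset_set0.
by rewrite cardfs0 subn0.
Qed.

Lemma cnt_fibers {T U : choiceType} (A : set T) (phi : T -> U) (s : seq U) :
  finite_set A -> uniq s ->
  cnt (A `&` [set x | phi x \in s]) = (\sum_(y <- s) cnt (A `&` [set x | phi x = y]))%N.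
Proof.
move=> fA; elim: s => [|y s IH] /=.
  move=> _; rewrite big_nil.
  have -> : A `&` [set x | phi x \in [::]] = set0.
    by apply/seteqP; split => x //= [].
  by rewrite /cnt fset_set0 cardfs0.
move=> /andP[ys us]; rewrite big_cons -IH //.
have -> : A `&` [set x | phi x \in y :: s] =
   (A `&` [set x | phi x = y]) `|` (A `&` [set x | phi x \in s]).
  apply/seteqP; split => x /=; rewrite inE.
    by move=> [Ax /orP[/eqP|]]; [left|right].
  by move=> [[Ax ->]|[Ax ->]]; split => //; rewrite ?eqxx ?orbT.
apply: cnt_setU_disj; try exact: finite_setIl.
apply/seteqP; split => x //= [[_ ->] [_]]; by rewrite (negbTE ys).
Qed.

Lemma cnt_image {T U : choiceType} (f : T -> U) (A : set T) :
  finite_set A -> {in A &, injective f} -> cnt (f @` A) = cnt A.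
Proof.
move=> fA inj; rewrite /cnt fset_set_image // card_in_imfset //.
move=> x y; rewrite !in_fset_set // => xA yA; exact: inj.
Qed.

Lemma cnt_eq0 {T : choiceType} : cnt (@set0 T) = 0%N.
Proof. by rewrite /cnt fset_set0 cardfs0. Qed.

Lemma cnt_set1 {T : choiceType} (x : T) : cnt [set x] = 1%N.
Proof. by rewrite /cnt fset_set1 cardfs1. Qed.

Lemma cnt_setX {T U : choiceType} (A : set T) (B : set U) :
  finite_set A -> finite_set B -> cnt (A `*` B) = (cnt A * cnt B)%N.
Proof.
move=> fA fB.
have fAB : finite_set (A `*` B) by exact: finite_setX.
have -> : A `*` B = (A `*` B) `&` [set x | x.1 \in (fset_set A : seq T)].
  apply/seteqP; split => [[x y] /= [Ax By]|x [] //].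
  by split => //; rewrite in_fset_set // inE.
have uA : uniq (fset_set A : seq T) := fset_uniq _.
rewrite cnt_fibers //.
rewrite (eq_big_seq (fun _ => cnt B)).
  by rewrite big_const_seq count_predT iter_addn_0 mulnC.
move=> a; rewrite in_fset_set // inE => Aa.
rewrite -[RHS](@cnt_image _ _ (pair a)) //; last by move=> x y _ _ [].
congr cnt; apply/seteqP; split => [[x y] /= [[_ By] <-]|_ [y By <-]] //.
by exists y.
Qed.

Local Open Scope classical_set_scope.

Section Join.
Variable d : nat.
Local Notation F := (seq 'I_d -> int).

Definition subt (f : F) (i : 'I_d) : F := fun s => f (i :: s).

Definition Join (k : int) (S : nat -> set F) : set F :=
  [set f | f [::] = k /\ forall i : 'I_d, S i (subt f i)].

Definition PJ (j : nat) (k : int) (S : nat -> set F) : set F :=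
  [set f | [/\ f [::] = k, (forall i : 'I_d, (i < j)%N -> S i (subt f i)) &
     (forall (i : 'I_d) s, (j <= i)%N -> f (i :: s) = 0%R)]].

Definition merge (j : nat) (p : F * F) : F := fun s =>
  match s with i :: s' => if (i == j :> nat) then p.2 s' else p.1 s | [::] => p.1 [::] end.

Definition zer (j : nat) (f : F) : F := fun s =>
  match s with i :: s' => if (i == j :> nat) then 0%R else f s | [::] => f [::] end.

Lemma PJ0 k S : PJ 0 k S = [set (fun s => if s is [::] then k else 0%R)].
Proof.
apply/seteqP; split => [f /= [f0 _ fz]|_ ->] /=.
  by apply/funext => -[|i s] //; rewrite fz.
by split.
Qed.

Lemma PJS j k S : (j < d)%N ->
  PJ j.+1 k S = merge j @` (PJ j k S `*` S j).
Proof.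
move=> jd; apply/seteqP; split => [f [f0 fS fz]|_ [[f h] [[f0 fS fz] Sh] <-]].
  exists (zer j f, subt f (Ordinal jd)).
    split; [split|].
    - by [].
    - by move=> i ij; rewrite /subt /zer /=; rewrite (ltn_eqF ij); apply: fS; lia.
    - move=> i s; rewrite leq_eqVlt => /orP[/eqP ij|ji]; rewrite /zer /=.
        by rewrite -ij eqxx.
      by rewrite (gtn_eqF ji) fz.
    - by have := fS (Ordinal jd) (ltnSn _).
  apply/funext => -[|i s] //=; rewrite /zer /=.
  by case: eqP => // ij; rewrite /subt; do 2 f_equal; apply: val_inj.
split => /=.
- by [].
- move=> i; rewrite ltnS leq_eqVlt => /orP[/eqP ij|ij].
    by rewrite /subt /merge /= ij eqxx.
  by rewrite /subt /merge /= (ltn_eqF ij); apply: fS.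
- move=> i s ji; rewrite /merge /= (gtn_eqF ji); apply: fz; lia.
Qed.

Lemma merge_inj j k S : (j < d)%N -> {in PJ j k S `*` S j &, injective (merge j)}.
Proof.
move=> jd [f h] [f' h']; rewrite !inE => -[[f0 _ fz] _] [[f0' _ fz'] _] E.
move: f0 f0' fz fz' => /= f0 f0' fz fz'.
have Eh : h = h'.
  apply/funext => s; have := congr1 (fun g : F => g (Ordinal jd :: s)) E.
  by rewrite /merge /= eqxx.
congr pair => //; apply/funext => -[|i s]; first by rewrite f0 f0'.
have := congr1 (fun g : F => g (i :: s)) E; rewrite /merge /=.
case: eqP => [ij _|_ ->//]; rewrite fz ?fz' //; lia.
Qed.

Lemma cnt_PJ j k S : (j <= d)%N -> (forall i, (i < d)%N -> finite_set (S i)) ->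
  finite_set (PJ j k S) /\ cnt (PJ j k S) = (\prod_(i < j) cnt (S i))%N.
Proof.
move=> + fS; elim: j => [|j IH] jd.
  by rewrite PJ0 big_ord0 cnt_set1; split => //; exact: finite_set1.
have [fP cP] := IH (ltnW jd).
have fX : finite_set (PJ j k S `*` S j) by apply: finite_setX => //; exact: fS.
rewrite PJS // big_ord_recr /=; split; first exact: finite_image.
by rewrite cnt_image //; [rewrite cnt_setX // ?cP //; exact: fS|exact: merge_inj].
Qed.

Lemma Join_PJ k S : Join k S = PJ d k S.
Proof.
apply/seteqP; split => [f [f0 fS]|f [f0 fS _]]; split => //.
- by move=> i; have := ltn_ord i; lia.
- by move=> i; apply: fS.
Qed.

Lemma cnt_Join k S : (forall i, (i < d)%N -> finite_set (S i)) ->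
  finite_set (Join k S) /\ cnt (Join k S) = (\prod_(i < d) cnt (S i))%N.
Proof. by move=> fS; rewrite Join_PJ; apply: cnt_PJ. Qed.

End Join.
Arguments subt {d} f i.
Arguments Join {d} k S.
Arguments cnt_Join {d} k S.

Local Open Scope classical_set_scope.
Local Open Scope ring_scope.

Section Tree.
Variable d : nat.
Local Notation F := (seq 'I_d -> int).
Local Notation A n := (adm01 d n).

Lemma adm_sub n (f : F) i : A n.+1 f -> A n (subt f i).
Proof.
move=> [fs fl fv]; split.
- by move=> s sn; apply: fs => /=; lia.
- by move=> s j sn; apply: (fl (i :: s) j) => /=; lia.
- by move=> s sn; apply: fv => /=; lia.
Qed.

Lemma adm_root n (f : F) i : A n.+1 f -> `|subt f i [::] - f [::]| <= 1.
Proof. by move=> [_ fl _]; apply: (fl [::] i). Qed.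

Lemma adm_join n (f : F) : (forall i, A n (subt f i)) ->
  (forall i, `|subt f i [::] - f [::]| <= 1) -> A n.+1 f.
Proof.
move=> fA fr; split.
- by move=> [|i s] //= sn; have [+ _ _] := fA i; apply => /=; lia.
- move=> [|i s] j /= sn; first exact: fr j.
  by have [_ + _] := fA i; apply => /=; lia.
- by move=> [|i s] //= [sn]; have [_ _ +] := fA i; apply.
Qed.


Lemma adm_dec n (f : F) : A n.+1 f <->
  (forall i, A n (subt f i)) /\ (forall i, `|subt f i [::] - f [::]| <= 1).
Proof.
split; last by case; apply: adm_join.
move=> fA; split => i; first exact: adm_sub.
exact: (adm_root n f i fA).
Qed.

Lemma adm0 (f : F) : A 0 f <->
  (forall s, s != [::] -> f s = 0) /\ (f [::] = 0 \/ f [::] = 1).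
Proof.
split=> [[fs _ fv]|[fs fv]].
  by split; [move=> [|i s] // _; apply: fs|apply: fv].
split => //.
- by move=> [|i s] //= _; apply: fs.
- by move=> [|i s].
Qed.

Lemma adm_bound (d0 : (0 < d)%N) n (f : F) : A n f -> - (n%:Z) <= f [::] <= n%:Z + 1.
Proof.
elim: n f => [|n IH] f.
  by move=> /adm0 [_ [->|->]].
move=> /adm_dec [fA fr].
have := IH _ (fA (Ordinal d0)); have := fr (Ordinal d0).
rewrite ler_norml; move: (subt f (Ordinal d0) [::]) (f [::]) => a b.
lia.
Qed.

Definition rng (a : int) (len : nat) : seq int := [seq a + i%:Z | i <- iota 0 len].

Lemma mem_rng a len k : (k \in rng a len) = (a <= k < a + len%:Z).
Proof.
apply/mapP/idP => [[i]|kr].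
  by rewrite mem_iota => /andP[_ ilen] ->; apply/andP; split; lia.
exists `|k - a|%N; last by lia.
by rewrite mem_iota; apply/andP; split; lia.
Qed.

Lemma rng_uniq a len : uniq (rng a len).
Proof.
rewrite map_inj_uniq ?iota_uniq //.
by move=> i j; lia.
Qed.

Lemma finA (d0 : (0 < d)%N) n : finite_set (A n).
Proof.
elim: n => [|n IH].
  apply: (@sub_finite_set _ _ [set (fun s => if s is [::] then 0 else 0%R) ;
                                  (fun s => if s is [::] then 1 else 0%R)]);
    last exact: finite_set2.
  move=> f /adm0 [fs [f0|f0]]; [left|right]; apply/funext => -[|i s] //=;
    by apply: fs.
apply: (@sub_finite_set _ _ (\bigcup_(k in [set` rng (- (n.+1)%:Z) (2 * n + 4)])
     Join k (fun _ => A n))).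
  move=> f fA; exists (f [::]).
    rewrite /= mem_rng; have := adm_bound d0 n.+1 f fA; lia.
  by split => // i; apply: adm_sub.
apply: bigcup_finite; first exact: finite_seq.
by move=> k _; have [+ _] := cnt_Join k (fun _ => A n) (fun _ _ => IH).
Qed.

End Tree.

Local Open Scope classical_set_scope.
Local Open Scope ring_scope.

Definition Zs d n k := adm01 d n `&` [set f | f [::] = k].
Definition Z d n k := cnt (Zs d n k).
Definition Nset d n r g := adm01 d n `&` [set f | restr d r f = g].
Definition compat d (g : seq 'I_d -> int) := forall i : 'I_d, `|g [:: i] - g [::]| <= 1.

Section Count.
Variable d : nat.
Hypothesis d0 : (0 < d)%N.
Local Notation F := (seq 'I_d -> int).
Local Notation A n := (adm01 d n).

Lemma Zdec n k : Zs d n.+1 k = Join k (fun _ => A n `&` [set h | `|h [::] - k| <= 1]).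
Proof.
apply/seteqP; split => [f [fA fk]|f [fk fS]].
  split => // i; split; first exact: adm_sub.
  by rewrite -fk; exact: (adm_root d n f i fA).
split => //; apply: adm_join => i; have [] := fS i => //.
by rewrite fk.
Qed.

Lemma cnt_nbr n k : cnt (A n `&` [set h | `|h [::] - k| <= 1]) =
  (Z d n (k-1) + Z d n k + Z d n (k+1))%N.
Proof.
have -> : A n `&` [set h | `|h [::] - k| <= 1] =
    A n `&` [set h | h [::] \in [:: k-1; k; k+1]].
  apply/seteqP; split => f [fA fk]; split => //=; move: fk; rewrite /= ?inE ler_norml.
    by move=> H; apply/orP; lia.
  move=> /orP[/eqP->|/orP[/eqP->|/eqP->]]; lia.
rewrite cnt_fibers //; last first.
  by rewrite /= !inE; apply/andP; split; [apply/norP; split|]; apply/eqP; lia.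
  exact: finA.
by rewrite !big_cons big_nil addn0 addnA.
Qed.

Lemma Zrec n k : Z d n.+1 k = ((Z d n (k-1) + Z d n k + Z d n (k+1)) ^ d)%N.
Proof.
rewrite /Z Zdec; have [_ ->] := cnt_Join k (fun _ => A n `&` [set h | `|h [::] - k| <= 1])
  (fun _ _ => finite_setIl _ (finA d d0 n)).
by rewrite prod_nat_const card_ord cnt_nbr.
Qed.

Lemma Z0 k : Z d 0 k = if (k == 0) || (k == 1) then 1%N else 0%N.
Proof.
rewrite /Z; case: ifP => hk.
  rewrite -[RHS](cnt_set1 ((fun s => if s is [::] then k else 0) : F)); congr cnt.
  apply/seteqP; split => [f [/adm0 [fs _] fk]|_ ->].
    by apply/funext => -[|i s] //=; apply: fs.
  by split => //; apply/adm0; split => [[|i s]|] //; move: hk => /orP[/eqP->|/eqP->]; [left|right].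
suff -> : Zs d 0 k = set0 by exact: cnt_eq0.
apply/seteqP; split => [f [/adm0 [_ fv] fk]|f []]; move: hk; rewrite -fk.
by case: fv => ->.
Qed.

Lemma Zsym n k : Z d n (1 - k) = Z d n k.
Proof.
elim: n k => [|n IH] k; first by rewrite !Z0; congr (if _ then _ else _); apply/idP/idP; lia.
rewrite !Zrec; congr (_ ^ _)%N.
rewrite -[in RHS](IH (k-1)) -[in RHS](IH k) -[in RHS](IH (k+1)).
have -> : 1 - (k - 1) = 1 - k + 1 by ring.
have -> : 1 - (k + 1) = 1 - k - 1 by ring.
by rewrite [RHS]addnC (addnC (Z d n (1 - k + 1))) addnA.
Qed.


Lemma cntA n : cnt (A n) = (\sum_(k <- rng (- n%:Z) (2 * n + 2)) Z d n k)%N.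
Proof.
rewrite -cnt_fibers; [|exact: finA|exact: rng_uniq].
congr cnt; apply/seteqP; split => [f fA|f []//]; split => //=.
by rewrite mem_rng; have := adm_bound d d0 n f fA; lia.
Qed.

End Count.

Local Open Scope classical_set_scope.
Local Open Scope ring_scope.

Arguments compat {d} g.
Section CountN.
Variable d : nat.
Hypothesis d0 : (0 < d)%N.
Local Notation F := (seq 'I_d -> int).
Local Notation A n := (adm01 d n).

Lemma Ndec n r (g : F) : Nset d n.+1 r.+1 g =
  if `[< compat g >] then
    Join (g [::]) (fun j => A n `&` [set h | forall i : 'I_d, (i = j :> nat) -> restr d r h = subt g i])
  else set0.
Proof.
case: (asboolP (compat g)) => cg.
  apply/seteqP; split => [f [fA fg]|f [f0 fS]].
    split; first by rewrite -fg.
    move=> j; split; first exact: adm_sub.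
    move=> i /val_inj ->; apply/funext => s; rewrite -fg /restr /subt /=.
    by [].
  have hi i : restr d r (subt f i) = subt g i by have [_ +] := fS i; apply.
  split.
    apply: adm_join => i; first by have [] := fS i.
    have := congr1 (fun h : F => h [::]) (hi i); rewrite /restr /subt /= => ->.
    by rewrite f0; apply: cg.
  apply/funext => -[|i s] /=; first by rewrite /restr /= f0.
  by have := congr1 (fun h : F => h s) (hi i); rewrite /restr /subt /=.
apply/seteqP; split => f // [fA fg]; apply: cg => i.
have := adm_root d n f i fA; rewrite -fg /restr /subt /=.
by [].
Qed.

Lemma cntN n r (g : F) : cnt (Nset d n.+1 r.+1 g) =
  if `[< compat g >] then (\prod_(i < d) cnt (Nset d n r (subt g i)))%N else 0%N.
Proof.
rewrite Ndec; case: ifP => _; last exact: cnt_eq0.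
have [_ ->] := cnt_Join (g [::]) (fun j => A n `&` [set h | forall i : 'I_d, (i = j :> nat) -> restr d r h = subt g i])
  (fun _ _ => finite_setIl _ (finA d d0 n)).
apply: eq_bigr => i _; congr cnt; apply/seteqP; split => h [hA hg]; split => //=.
  by apply: hg.
by move=> i' /val_inj ->.
Qed.

Lemma N0 n (g : F) : cnt (Nset d n 0 g) =
  if `[< forall s, s != [::] -> g s = 0 >] then Z d n (g [::]) else 0%N.
Proof.
case: (asboolP _) => g0.
  rewrite /Z; congr cnt; apply/seteqP; split => f [fA fg]; split => //=.
    by rewrite -fg.
  apply/funext => -[|i s]; rewrite /restr /=; first by rewrite fg.
  by rewrite g0.
suff -> : Nset d n 0 g = set0 by exact: cnt_eq0.
apply/seteqP; split => f // [fA fg]; apply: g0 => -[|i s] // _.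
by rewrite -fg.
Qed.

End CountN.

Local Open Scope classical_set_scope.
Local Open Scope ring_scope.

Section TP2.
Variable R : realType.

Definition S3 (A : int -> R) (k : int) := A (k - 1) + A k + A (k + 1).

Lemma lin9 (a1 a2 a3 b1 b2 b3 c1 c2 c3 e1 e2 e3 : R) :
  c1 * b1 <= a1 * e1 -> c2 * b1 <= a1 * e2 -> c3 * b1 <= a1 * e3 ->
  c1 * b2 <= a2 * e1 -> c2 * b2 <= a2 * e2 -> c3 * b2 <= a2 * e3 ->
  c1 * b3 <= a3 * e1 -> c2 * b3 <= a3 * e2 -> c3 * b3 <= a3 * e3 ->
  (c1 + c2 + c3) * (b1 + b2 + b3) <= (a1 + a2 + a3) * (e1 + e2 + e3).
Proof. move=> *; lra. Qed.

Lemma TP2S (A B : int -> R) :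
  A 0 = A 1 -> B 0 = B 1 ->
  (forall p q : int, 1 <= p -> p <= q -> A q * B p <= A p * B q) ->
  forall p q : int, 1 <= p -> p <= q -> S3 A q * S3 B p <= S3 A p * S3 B q.
Proof.
move=> eA eB H p q p1 pq; rewrite /S3.
have [->|pq'] := eqVneq p q; first by [].
have Hh (x y : int) : 1 <= x -> x <= y -> A y * B x <= A x * B y by move=> *; apply: H.
have [->|p2] := eqVneq p 1.
  rewrite subrr eA eB.
  have [->|q3] := eqVneq q 2.
    have -> : (2 - 1 : int) = 1 by []. have -> : (2 + 1 : int) = 3 by [].
    have -> : (1 + 1 : int) = 2 by [].
    have h12 := Hh 1 2 isT isT; have h13 := Hh 1 3 isT isT; have h23 := Hh 2 3 isT isT.
    lra.
  have -> : (1 + 1 : int) = 2 by [].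
  apply: lin9; apply: Hh; lia.
have [->|q3] := eqVneq q (p + 1).
  have -> : p + 1 - 1 = p by ring.
  have -> : p + 1 + 1 = p + 2 by ring.
  have h1 := Hh (p - 1) p ltac:(lia) ltac:(lia).
  have h2 := Hh (p - 1) (p + 1) ltac:(lia) ltac:(lia).
  have h3 := Hh (p - 1) (p + 2) ltac:(lia) ltac:(lia).
  have h4 := Hh p (p + 2) ltac:(lia) ltac:(lia).
  have h5 := Hh (p + 1) (p + 2) ltac:(lia) ltac:(lia).
  lra.
apply: lin9; apply: Hh; lia.
Qed.

Lemma TP2X (A B : int -> R) (n : nat) : (forall k, 0 <= A k) -> (forall k, 0 <= B k) ->
  forall p q : int, S3 A q * S3 B p <= S3 A p * S3 B q ->
  S3 A q ^+ n * S3 B p ^+ n <= S3 A p ^+ n * S3 B q ^+ n.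
Proof.
move=> A0 B0 p q h; rewrite -!exprMn; apply: lerXn2r; rewrite ?nnegrE //.
  by apply: mulr_ge0; apply: addr_ge0; rewrite ?addr_ge0.
by apply: mulr_ge0; apply: addr_ge0; rewrite ?addr_ge0.
Qed.

End TP2.
Arguments S3 {R} A k.

Local Open Scope classical_set_scope.
Local Open Scope ring_scope.

Lemma divle (R : realFieldType) (a b c e : R) : 0 < a -> 0 < c -> b * c <= e * a -> b / a <= e / c.
Proof. by move=> a0 c0 h; rewrite ler_pdivrMr // mulrAC ler_pdivlMr. Qed.

Lemma powd (R : realFieldType) (d : nat) (u w c : R) : (2 <= d)%N -> 0 <= u -> u <= w -> 0 <= c ->
  u ^+ 2 * c <= w ^+ 2 -> u ^+ d * c <= w ^+ d.
Proof.
move=> d2 u0 uw c0 h; have -> : d = ((d - 2) + 2)%N by rewrite subnK.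
rewrite !exprD -mulrA; apply: ler_pM => //.
- exact: exprn_ge0.
- exact: mulr_ge0 (exprn_ge0 _ _) _.
- by apply: lerXn2r; rewrite ?nnegrE //; apply: le_trans uw.
Qed.

Section Zreal.
Variable R : realType.
Variable d : nat.
Hypothesis d2 : (2 <= d)%N.
Let d0 : (0 < d)%N. Proof. exact: leq_trans d2. Qed.

Definition z n k : R := (Z d n k)%:R.

Lemma z_ge0 n k : 0 <= z n k. Proof. exact: ler0n. Qed.

Lemma z_rec n k : z n.+1 k = S3 (z n) k ^+ d.
Proof. by rewrite /z (Zrec d d0) natrX !natrD. Qed.

Lemma z_sym n k : z n (1 - k) = z n k.
Proof. by rewrite /z (Zsym d d0). Qed.

Lemma z_01 n : z n 0 = z n 1.
Proof. by rewrite -z_sym subr0. Qed.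

Lemma z_0 k : z 0 k = if (k == 0) || (k == 1) then 1 else 0.
Proof. by rewrite /z Z0; case: ifP. Qed.

Lemma z1_gt0 n : 0 < z n 1.
Proof.
elim: n => [|n IH]; first by rewrite z_0.
rewrite z_rec; apply: exprn_gt0; rewrite /S3.
have := z_ge0 n (1 - 1); have := z_ge0 n (1 + 1); lra.
Qed.

Lemma z_TP2 n : forall p q : int, 1 <= p -> p <= q -> z n q * z n.+1 p <= z n p * z n.+1 q.
Proof.
elim: n => [|n IH] p q p1 pq.
  have [q1|q2] := eqVneq q 1.
    have p1' : p = 1 by lia.
    by rewrite p1' q1.
  have -> : z 0 q = 0.
    by rewrite z_0 ifF //; apply/negP => /orP[] /eqP; lia.
  by rewrite mul0r mulr_ge0 // z_ge0.
rewrite [z n.+2 p]z_rec [z n.+2 q]z_rec [z n.+1 p]z_rec [z n.+1 q]z_rec.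
apply: TP2X; [exact: z_ge0|exact: z_ge0|].
apply: TP2S => //; [exact: z_01|exact: z_01].
Qed.

Definition x n k : R := z n k / z n 1.

Lemma x_ge0 n k : 0 <= x n k.
Proof. by apply: divr_ge0; [apply: z_ge0|apply: ltW; apply: z1_gt0]. Qed.

Lemma x_sym n k : x n (1 - k) = x n k.
Proof. by rewrite /x z_sym. Qed.

Lemma x_1 n : x n 1 = 1.
Proof. by rewrite /x divff // gt_eqF // z1_gt0. Qed.

Lemma x_mono n k : x n k <= x n.+1 k.
Proof.
wlog k1 : k / 1 <= k.
  move=> W; have [/W//|k0] := lerP 1 k.
  by rewrite -x_sym -[x n.+1 k]x_sym; apply: W; lia.
by apply: divle; rewrite ?z1_gt0 // [X in _ <= X]mulrC; apply: z_TP2.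
Qed.

End Zreal.

Local Open Scope classical_set_scope.
Local Open Scope ring_scope.

Section Bnd.
Variable R : realType.
Variable d : nat.
Hypothesis d2 : (2 <= d)%N.
Local Notation z := (@z R d).
Local Notation x := (@x R d).

Lemma z_bnd n j : z n (j.+1)%:Z * 2 ^+ j <= z n 1.
Proof.
elim: n j => [|n IH] j.
  rewrite !z_0; case: j => [|i]; first by rewrite expr0 mulr1.
  by rewrite /= mul0r.
case: j => [|[|i]]; first by rewrite expr0 mulr1.
  rewrite !(z_rec _ _ d2) /S3.
  have -> : (1%:Z - 1) = 0 by []. have -> : (1 + 1 : int) = 2 by [].
  have -> : ((1%N.+1)%:Z - 1) = 1 by []. have -> : ((1%N.+1)%:Z + 1) = 3 by [].
  rewrite (z_01 _ _ d2).
  have h1 := IH 1%N; have h2 := IH 2%N; rewrite expr1 in h1.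
  have e4 : (2 : R) ^+ 2 = 4 by rewrite expr2; lra.
  rewrite e4 in h2.
  have a0 := z1_gt0 R d d2 n; have b1 := z_ge0 R d n 2; have b2 := z_ge0 R d n 3.
  apply: (@powd _ _ _ _ _ d2) => //; try lra.
  rewrite expr1 !expr2.
  set u := _ + _ + z n 3; set w := _ + _ + z n 2.
  have hu : 10 * u <= 7 * w by rewrite /u /w; lra.
  have hu0 : 0 <= u by rewrite /u; lra.
  have h3 : 0 <= (7 * w - 10 * u) * (7 * w + 10 * u) by apply: mulr_ge0; lra.
  nra.
rewrite !(z_rec _ _ d2) /S3.
have -> : (1%:Z - 1) = 0 by []. have -> : (1 + 1 : int) = 2 by [].
have -> : ((i.+3)%:Z - 1) = (i.+2)%:Z by lia.
have -> : ((i.+3)%:Z + 1) = (i.+4)%:Z by lia.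
rewrite (z_01 _ _ d2).
have h1 := IH i.+1; have h2 := IH i.+2; have h3 := IH i.+3.
set Q := (2 : R) ^+ i.+1.
have eP : (2 : R) ^+ i.+2 = Q * 2 by rewrite exprSr.
have eP3 : (2 : R) ^+ i.+3 = Q * 4 by rewrite exprSr eP -mulrA; congr (_ * _); lra.
rewrite eP in h2 *; rewrite eP3 in h3; rewrite -/Q in h1.
have Q2 : 2 <= Q by rewrite /Q exprS; have := exprn_ege1 i (ler1n R 2); rewrite -[2%:R]/2; nra.
have a0 := z1_gt0 R d d2 n; have b1 := z_ge0 R d n 2.
have c2 := z_ge0 R d n (i.+2)%:Z; have c3 := z_ge0 R d n (i.+3)%:Z; have c4 := z_ge0 R d n (i.+4)%:Z.
set u := _ + _ + z n (i.+4)%:Z; set w := _ + _ + z n 2.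
set P := Q * 2.
have hP : 4 <= P by rewrite /P; lra.
have hu0 : 0 <= u by rewrite /u; lra.
have huP : 4 * (u * P) <= 7 * w.
  rewrite /u /w /P; lra.
have hq1 : 0 <= u * (P - 4) by apply: mulr_ge0; lra.
have h16 : 16 * u <= 7 * w by lra.
have hq2 : 0 <= (7 * w - 16 * u) * (u * P) by apply: mulr_ge0; [lra|apply: mulr_ge0; lra].
have hq3 : 0 <= w * (7 * w - 4 * (u * P)) by apply: mulr_ge0; lra.
apply: (@powd _ _ _ _ _ d2) => //; try lra.
rewrite !expr2; nra.
Qed.

Lemma x_bnd n j : x n (j.+1)%:Z * 2 ^+ j <= 1.
Proof.
rewrite /x mulrAC ler_pdivrMr ?mul1r; first exact: z_bnd.
exact: z1_gt0.
Qed.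

Lemma x_le1 n k : x n k <= 1.
Proof.
wlog k1 : k / 1 <= k.
  move=> W; have [/W//|k0] := lerP 1 k.
  by rewrite -(x_sym _ _ d2); apply: W; lia.
have -> : k = (`|k - 1|%N.+1)%:Z by lia.
apply: le_trans (x_bnd n _); apply: ler_peMr; first exact: x_ge0.
apply: exprn_ege1; lra.
Qed.

End Bnd.

Local Open Scope classical_set_scope.
Local Open Scope ring_scope.

Section Weights.
Variable R : realType.
Variable d : nat.
Local Notation F := (seq 'I_d -> int).

Fixpoint W (xx : int -> R) (r : nat) (g : F) {struct r} : R :=
  match r with
  | 0 => if `[< forall s, s != [::] -> g s = 0 >] then xx (g [::]) else 0
  | r'.+1 => if `[< compat g >] then \prod_(i < d) W xx r' (subt g i) else 0
  end.

Fixpoint Y (xx : int -> R) (r : nat) (k : int) {struct r} : R :=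
  match r with
  | 0 => xx k
  | r'.+1 => S3 (Y xx r') k ^+ d
  end.

Lemma W_hom c xx r g : W (fun k => c * xx k) r g = c ^+ (d ^ r) * W xx r g.
Proof.
elim: r g => [|r IH] g /=; first by case: ifP; rewrite ?mulr0 // expn0 expr1.
case: ifP => _; last by rewrite mulr0.
under eq_bigr do rewrite IH.
by rewrite big_split /= prodr_const card_ord -exprM expnSr.
Qed.

Lemma Y_hom c xx r k : Y (fun k => c * xx k) r k = c ^+ (d ^ r) * Y xx r k.
Proof.
elim: r k => [|r IH] k /=; first by rewrite expn0 expr1.
rewrite /S3 !IH -!mulrDr exprMn -exprM expnSr.
by [].
Qed.

Lemma W_mono xx yy r g : (forall k, 0 <= xx k <= yy k) -> 0 <= W xx r g <= W yy r g.
Proof.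
move=> h; elim: r g => [|r IH] g /=.
  by case: ifP => _; [apply: h|rewrite lexx].
case: ifP => _; last by rewrite lexx.
apply/andP; split.
  by apply: prodr_ge0 => i _; have /andP[] := IH (subt g i).
by apply: ler_prod => i _; apply: IH.
Qed.

Lemma W_le1 xx r g : (forall k, 0 <= xx k <= 1) -> W xx r g <= 1.
Proof.
move=> h; elim: r g => [|r IH] g /=.
  by case: ifP => _; [have /andP[] := h (g [::])|rewrite ler01].
case: ifP => _; last by rewrite ler01.
apply: prodr_ile1 => i _; apply/andP; split => //.
have hx k : 0 <= xx k <= xx k by rewrite lexx andbT; have /andP[] := h k.
by have /andP[] := W_mono _ _ r (subt g i) hx.
Qed.

Lemma S3_mono (A B : int -> R) k : (forall k, 0 <= A k <= B k) -> 0 <= S3 A k <= S3 B k.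
Proof.
move=> h; rewrite /S3; have := h (k - 1); have := h k; have := h (k + 1).
move=> /andP[? ?] /andP[? ?] /andP[? ?]; apply/andP; split; lra.
Qed.

Lemma Y_mono xx yy r : (forall k, 0 <= xx k <= yy k) -> forall k, 0 <= Y xx r k <= Y yy r k.
Proof.
move=> h; elim: r => [|r IH] k //=.
have /andP[h0 h1] := S3_mono _ _ k IH.
by rewrite exprn_ge0 //= lerXn2r // nnegrE; apply: le_trans h1.
Qed.

Lemma Y_ge0 xx r k : (forall k, 0 <= xx k) -> 0 <= Y xx r k.
Proof.
move=> h; have hx k' : 0 <= xx k' <= xx k' by rewrite lexx andbT.
by have /andP[] := Y_mono _ _ r hx k.
Qed.

Lemma W_ge0 xx r g : (forall k, 0 <= xx k) -> 0 <= W xx r g.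
Proof.
move=> h; have hx k' : 0 <= xx k' <= xx k' by rewrite lexx andbT.
by have /andP[] := W_mono _ _ r g hx.
Qed.

Fixpoint cY (r : nat) : R := if r is r'.+1 then (3 * cY r') ^+ d else 1.

Lemma Y_bnd xx r k : (forall k, 0 <= xx k <= 1) -> Y xx r k <= cY r.
Proof.
move=> h; elim: r k => [|r IH] k /=; first by have /andP[] := h k.
have hx k' : 0 <= xx k' <= xx k' by rewrite lexx andbT; have /andP[] := h k'.
have hY k' : 0 <= Y xx r k' by have /andP[] := Y_mono _ _ r hx k'.
apply: lerXn2r; rewrite ?nnegrE.
- by rewrite /S3 !addr_ge0.
- by apply: mulr_ge0; [lra|apply: le_trans (IH 0)].
by rewrite /S3; have := IH (k - 1); have := IH k; have := IH (k + 1); lra.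
Qed.

Lemma Y_ge1 xx r : (forall k, 0 <= xx k) -> xx 1 = 1 -> 1 <= Y xx r 1.
Proof.
move=> h0 h1; have hY r' k : 0 <= Y xx r' k.
  have hx k' : 0 <= xx k' <= xx k' by rewrite lexx andbT.
  by have /andP[] := Y_mono _ _ r' hx k.
elim: r => [|r IH] /=; first by rewrite h1.
apply: exprn_ege1; rewrite /S3; have := hY r (1 - 1); have := hY r (1 + 1); lra.
Qed.

End Weights.
Arguments W {R d} xx r g.
Arguments Y {R d} xx r k.
Arguments cY {R} d r.
Arguments W_hom {R d} c xx r g.
Arguments Y_hom {R d} c xx r k.
Arguments W_mono {R d} xx yy r g.
Arguments W_le1 {R d} xx r g.
Arguments S3_mono {R} A B k.
Arguments Y_mono {R d} xx yy r.
Arguments Y_bnd {R d} xx r k.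
Arguments Y_ge1 {R d} xx r.
Arguments Y_ge0 {R d} xx r k.
Arguments W_ge0 {R d} xx r g.

Local Open Scope classical_set_scope.
Local Open Scope ring_scope.

Lemma rng_ext a n : rng (a - 1) n.+2 = (a - 1) :: rcons (rng a n) (a + n%:Z).
Proof.
rewrite /rng.
have -> : iota 0 n.+2 = 0%N :: iota 1 (n + 1) by rewrite addn1.
rewrite map_cons addr0; congr cons.
rewrite iotaD map_cat /= cats1; congr rcons; last by lia.
rewrite -[1%N]/(1 + 0)%N iotaDl -map_comp; apply: eq_map => i /=; lia.
Qed.

Section Law.
Variable R : realType.
Variable d : nat.
Hypothesis d2 : (2 <= d)%N.
Let d0 : (0 < d)%N. Proof. exact: leq_trans d2. Qed.
Local Notation F := (seq 'I_d -> int).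
Local Notation z := (@z R d).
Local Notation x := (@x R d).
Local Notation Y := (@Y R d).

Lemma W_cnt m r (g : F) : ((cnt (Nset d (m + r) r g))%:R : R) = W (z m) r g.
Proof.
elim: r g => [|r IH] g.
  by rewrite addn0 N0 /=; case: ifP.
rewrite addnS (cntN d d0) /=; case: ifP => // _.
by rewrite natr_prod; apply: eq_bigr => i _; rewrite IH.
Qed.

Lemma Y_z m r k : z (m + r) k = Y (z m) r k.
Proof.
elim: r k => [|r IH] k /=; first by rewrite addn0.
by rewrite addnS (z_rec _ _ d2) /S3 !IH.
Qed.

Lemma z_x m : z m = (fun k => z m 1 * x m k).
Proof.
apply/funext => k; rewrite /x mulrC divfK //.
by rewrite gt_eqF // (z1_gt0 _ _ d2).
Qed.

Lemma cntA_R n : ((cnt (adm01 d n))%:R : R) = \sum_(k <- rng (- n%:Z) (2 * n + 2)) z n k.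
Proof. by rewrite (cntA d d0) natr_sum. Qed.

Definition U r m := \sum_(k <- rng (- (m + r)%:Z) (2 * (m + r) + 2)) Y (x m) r k.

Lemma law_eq m r (g : F) : law R d (m + r) r g = W (x m) r g / U r m.
Proof.
rewrite /law -/(Nset d (m + r) r g) W_cnt cntA_R.
under eq_bigr do rewrite Y_z.
rewrite z_x W_hom.
under eq_bigr do rewrite Y_hom.
rewrite -mulr_sumr -mulf_div divff ?mul1r //.
by rewrite expf_eq0 negb_and gt_eqF ?orbT // (z1_gt0 _ _ d2).
Qed.

Lemma x_bd m k : 0 <= x m k <= 1.
Proof. by apply/andP; split; [exact: x_ge0|exact: (x_le1 _ _ d2)]. Qed.

Lemma xmono_bd m k : 0 <= x m k <= x m.+1 k.
Proof. by apply/andP; split; [exact: x_ge0|exact: (x_mono _ _ d2)]. Qed.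

Lemma U_mono r m : U r m <= U r m.+1.
Proof.
rewrite /U addSn.
have -> : - (m + r).+1%:Z = - (m + r)%:Z - 1 by lia.
have -> : (2 * (m + r).+1 + 2 = (2 * (m + r) + 2).+2)%N by lia.
rewrite rng_ext big_cons -cats1 big_cat big_seq1 /=.
have h0 k : 0 <= Y (x m.+1) r k by apply: (@Y_ge0 R d) => k'; exact: x_ge0.
have hS : \sum_(k <- rng (- (m + r)%:Z) (2 * (m + r) + 2)) Y (x m) r k <=
   \sum_(k <- rng (- (m + r)%:Z) (2 * (m + r) + 2)) Y (x m.+1) r k.
  by apply: ler_sum => k _; have /andP[] := @Y_mono R d _ _ r (xmono_bd m) k.
have := h0 (- (m + r)%:Z - 1); have := h0 (- (m + r)%:Z + (2 * (m + r) + 2)%N%:Z); lra.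
Qed.

Lemma U_ge1 r m : 1 <= U r m.
Proof.
rewrite /U (bigD1_seq 1) /=; last exact: rng_uniq.
  have := @Y_ge1 R d (x m) r (x_ge0 _ _ d2 m) (x_1 _ _ d2 m).
  have : 0 <= \sum_(k <- rng (- (m + r)%:Z) (2 * (m + r) + 2) | k != 1) Y (x m) r k.
    by apply: sumr_ge0 => k _; apply: (@Y_ge0 R d) => k'; exact: x_ge0.
  lra.
by rewrite mem_rng; lia.
Qed.

End Law.

Local Open Scope classical_set_scope.
Local Open Scope ring_scope.

Section Bsum.
Variable R : realType.

Definition bb (k : int) : R :=
  if (1 <= k) then (2^-1) ^+ `|k - 1|%N else (2^-1) ^+ `|k|%N.

Lemma bb_ge0 k : 0 <= bb k.
Proof. by rewrite /bb; case: ifP => _; apply: exprn_ge0; rewrite invr_ge0. Qed.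

Lemma bsum M : \sum_(k <- rng (- M%:Z) (2 * M + 2)) bb k = 4 - 2 * (2^-1) ^+ M.
Proof.
elim: M => [|M IH].
  rewrite /rng /= !big_cons big_nil /bb /=; lra.
have -> : - (M.+1)%:Z = - M%:Z - 1 by lia.
have -> : (2 * M.+1 + 2 = (2 * M + 2).+2)%N by lia.
rewrite rng_ext big_cons -cats1 big_cat big_seq1 /= IH.
have e1 : bb (- M%:Z - 1) = (2^-1) ^+ M.+1.
  rewrite /bb; case: ifP => h; first by lia.
  by congr (_ ^+ _); lia.
have e2 : bb (- M%:Z + (2 * M + 2)%N%:Z) = (2^-1) ^+ M.+1.
  rewrite /bb; case: ifP => h; last by lia.
  by congr (_ ^+ _); lia.
rewrite e1 e2 exprS; lra.
Qed.

Lemma bsum_le4 M : \sum_(k <- rng (- M%:Z) (2 * M + 2)) bb k <= 4.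
Proof.
rewrite bsum; have : 0 <= (2^-1 : R) ^+ M by apply: exprn_ge0; rewrite invr_ge0; lra.
lra.
Qed.

End Bsum.

Section Conv.
Variable R : realType.
Variable d : nat.
Hypothesis d2 : (2 <= d)%N.
Local Notation F := (seq 'I_d -> int).
Local Notation z := (@z R d).
Local Notation x := (@x R d).
Local Notation Y := (@Y R d).

Lemma x_le_pow n j : x n j.+1 <= (2^-1) ^+ j.
Proof.
have h := x_bnd R d d2 n j.
have p : (0 : R) < 2 ^+ j by apply: exprn_gt0; lra.
rewrite exprVn -[X in _ <= X]mul1r ler_pdivlMr //.
Qed.

Lemma x_le_bb n k : x n k <= bb R k.
Proof.
rewrite /bb; case: ifP => k1.
  have -> : k = (`|k - 1|%N).+1%:Z by lia.
  have -> : `|(`|k - 1|%N).+1%:Z - 1|%N = `|k - 1|%N by lia.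
  exact: x_le_pow.
rewrite -(x_sym _ _ d2); have -> : 1 - k = (`|k|%N).+1%:Z by lia.
exact: x_le_pow.
Qed.

Lemma z_x' m k : z m k = z m 1 * x m k.
Proof. by rewrite /x mulrC divfK // gt_eqF // (z1_gt0 _ _ d2). Qed.

Lemma Yz_x m r k : Y (z m) r k = z m 1 ^+ (d ^ r) * Y (x m) r k.
Proof. by rewrite -Y_hom; congr Y; apply/funext => k'; rewrite z_x'. Qed.

Lemma U_id r m : U R d r m =
  Y (x m) r 1 * \sum_(k <- rng (- (m + r)%:Z) (2 * (m + r) + 2)) x (m + r) k.
Proof.
have c0 : z m 1 ^+ (d ^ r) != 0 by rewrite expf_eq0 negb_and gt_eqF ?orbT // (z1_gt0 _ _ d2).
apply: (mulfI c0); rewrite /U mulr_sumr mulrA -Yz_x -(Y_z _ _ d2) mulr_sumr.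
by apply: eq_bigr => k _; rewrite -Yz_x -(Y_z _ _ d2) z_x'.
Qed.

Lemma U_bnd r m : U R d r m <= cY d r * 4.
Proof.
rewrite U_id; apply: ler_pM.
- by apply: (@Y_ge0 R d) => k; exact: x_ge0.
- by apply: sumr_ge0 => k _; exact: x_ge0.
- by apply: Y_bnd => k; exact: (x_bd _ _ d2).
apply: le_trans (bsum_le4 R (m + r)).
by apply: ler_sum => k _; exact: x_le_bb.
Qed.

End Conv.

Local Open Scope classical_set_scope.
Local Open Scope ring_scope.

Lemma mono_cvg (R : realType) (u : nat -> R) B : (forall n, u n <= u n.+1) -> (forall n, u n <= B) ->
  u @ \oo --> sup (range u).
Proof.
move=> hu hB; apply: nondecreasing_cvgn; first exact/nondecreasing_seqP.
by exists B => _ [n _ <-].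
Qed.

Section Conv2.
Variable R : realType.
Variable d : nat.
Hypothesis d2 : (2 <= d)%N.
Local Notation F := (seq 'I_d -> int).
Local Notation x := (@x R d).

Lemma law_cvg r (g : F) : cvgn (fun n => law R d n r g).
Proof.
set Wl := sup (range (fun m => W (x m) r g)).
set Ul := sup (range (U R d r)).
have cW : (fun m => W (x m) r g) @ \oo --> Wl.
  apply: (@mono_cvg _ _ 1) => m.
    by have /andP[] := W_mono _ _ r g (xmono_bd R d d2 m).
  by apply: W_le1 => k; exact: (x_bd _ _ d2).
have cU : U R d r @ \oo --> Ul.
  apply: (@mono_cvg _ _ (cY d r * 4)) => m; first exact: U_mono.
  exact: U_bnd.
have U1 : 1 <= Ul.
  rewrite -(cvg_lim _ cU) //; apply: limr_ge; first exact: (cvgP _ cU).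
  by near=> m; exact: U_ge1.
apply: (cvgP (Wl / Ul)); rewrite -(cvg_shiftn r).
have -> : (fun n => law R d (n + r) r g) = (fun m => W (x m) r g / U R d r m).
  by apply/funext => m; rewrite law_eq.
apply: cvgM => //; apply: cvgV => //; rewrite gt_eqF //; lra.
Unshelve. all: by end_near.
Qed.

End Conv2.

Local Open Scope classical_set_scope.
Local Open Scope ring_scope.

Lemma cnt_le {T : choiceType} (A B : set T) : A `<=` B -> finite_set B -> (cnt A <= cnt B)%N.
Proof.
move=> AB fB; have fA : finite_set A by exact: sub_finite_set fB.
by rewrite /cnt; apply: fsubset_leq_card; rewrite -fset_set_sub.
Qed.

Section Esum1.
Variable d : nat.
Hypothesis d2 : (2 <= d)%N.
Let d0 : (0 < d)%N. Proof. exact: leq_trans d2. Qed.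
Local Notation F := (seq 'I_d -> int).
Local Notation A n := (adm01 d n).

Lemma sum_N n r (L : seq F) : uniq L ->
  (\sum_(g <- L) cnt (Nset d n r g))%N = cnt (A n `&` [set f | restr d r f \in L]).
Proof. by move=> uL; rewrite cnt_fibers //; exact: finA. Qed.

Lemma sum_N_le n r (L : seq F) : uniq L -> (\sum_(g <- L) cnt (Nset d n r g) <= cnt (A n))%N.
Proof.
by move=> uL; rewrite sum_N //; apply: cnt_le; [exact: subIsetl|exact: finA].
Qed.

Lemma law_sum_le1 (R : realType) n r (L : seq F) : uniq L -> \sum_(g <- L) law R d n r g <= 1.
Proof.
move=> uL; rewrite /law -mulr_suml -natr_sum.
have := sum_N_le n r L uL; rewrite /Nset.
move: (\sum_(_ <- _) _)%N (cnt _) => a b ab.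
have [->|b0] := eqVneq b 0%N; first by rewrite invr0 mulr0.
rewrite ler_pdivrMr ?mul1r ?ler_nat //; rewrite ltr0n lt0n //.
Qed.

Lemma lip_path n (f : F) : A n f -> forall s, (size s <= n)%N -> `|f s - f [::]| <= (size s)%:Z.
Proof.
move=> [_ fl _]; elim/last_ind => [|s i IH] /=; first by rewrite subrr normr0.
rewrite size_rcons => sn.
have h1 := fl s i sn; have h2 := IH (ltnW sn).
have := ler_normD (f (rcons s i) - f s) (f s - f [::]).
rewrite addrA subrK => h; apply: le_trans h _.
by rewrite -addn1 PoszD addrC lerD.
Qed.


Definition Bset r (M : nat) : set F :=
  [set g | (forall s, (r < size s)%N -> g s = 0) /\ forall s, `|g s| <= M%:Z].

Lemma finB r M : finite_set (Bset r M).
Proof.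
elim: r => [|r IH].
  apply: (@sub_finite_set _ _ (\bigcup_(k in [set` rng (- M%:Z) (2 * M + 1)])
      [set ((fun s => if s is [::] then k else 0) : F)])).
    move=> g [gs gb]; exists (g [::]).
      by rewrite /= mem_rng; have := gb [::]; rewrite ler_norml; lia.
    by apply/funext => -[|i s] //=; apply: gs.
  by apply: bigcup_finite; [exact: finite_seq|move=> *; exact: finite_set1].
apply: (@sub_finite_set _ _ (\bigcup_(k in [set` rng (- M%:Z) (2 * M + 1)])
      Join k (fun _ => Bset r M))).
  move=> g [gs gb]; exists (g [::]).
    by rewrite /= mem_rng; have := gb [::]; rewrite ler_norml; lia.
  split => // i; split => [s rs|s]; last exact: gb.
  by apply: gs => /=; lia.
apply: bigcup_finite; first exact: finite_seq.
by move=> k _; have [+ _] := cnt_Join k (fun _ => Bset r M) (fun _ _ => IH).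
Qed.

Definition XK r (K : nat) : set F :=
  [set g | exists n (f : F), A n f /\ `|f [::]| <= K%:Z /\ restr d r f = g].

Lemma finXK r K : finite_set (XK r K).
Proof.
apply: (sub_finite_set _ (finB r (K + r))).
move=> _ [n [f [fA [fK <-]]]]; split => [s rs|s]; rewrite /restr.
  by case: ifP => //; lia.
case: ifP => sr; last by rewrite normr0.
have [sn|ns] := leqP (size s) n.
  have := lip_path n f fA s sn.
  move: (f s) (f [::]) fK => a b; rewrite !ler_norml; lia.
have [fs _ _] := fA; by rewrite fs // normr0.
Qed.

Lemma lower_cnt n r K : (cnt (A n `&` [set f : F | (`|f [::]| <= K%:Z)%R]) <=
   \sum_(g <- fset_set (XK r K)) cnt (Nset d n r g))%N.
Proof.
rewrite sum_N; last exact: fset_uniq.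
apply: cnt_le; last by apply: finite_setIl; exact: finA.
move=> f [fA fK]; split => //=; rewrite in_fset_set ?inE; last exact: finXK.
by exists n, f.
Qed.

Lemma split_cnt n (K : nat) : cnt (A n) = (cnt (A n `&` [set f : F | (`|f [::]| <= K%:Z)%R]) +
   cnt (A n `&` [set f : F | (K%:Z < `|f [::]|)%R]))%N.
Proof.
rewrite -cnt_setU_disj; first congr cnt.
- apply/seteqP; split => [f fA|f [[fA _]|[fA _]] //].
  by have [h|h] := leP `|f [::]| K%:Z; [left|right].
- by apply: finite_setIl; exact: finA.
- by apply: finite_setIl; exact: finA.
apply/seteqP; split => f // [[_ h1] [_ h2]]; move: h1 h2 => /=; lia.
Qed.

End Esum1.

Local Open Scope classical_set_scope.
Local Open Scope ring_scope.

Section Tail.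
Variable R : realType.
Local Notation h := ((2 : R)^-1).

Definition tl (K M : nat) : R :=
  \sum_(k <- rng (- M%:Z) (2 * M + 2)) (if K%:Z < `|k| then bb R k else 0).

Lemma tl0 K M : (M < K)%N -> tl K M = 0.
Proof.
move=> MK; rewrite /tl big1_seq // => k /andP[_]; rewrite mem_rng => hk.
by rewrite ifF //; apply/negbTE; rewrite -leNgt ler_norml; lia.
Qed.

Lemma tlS K M : tl K M.+1 = (if (K < M.+1)%N then h ^+ M.+1 else 0) + tl K M +
   (if (K < M.+2)%N then h ^+ M.+1 else 0).
Proof.
rewrite /tl.
have -> : - (M.+1)%:Z = - M%:Z - 1 by lia.
have -> : (2 * M.+1 + 2 = (2 * M + 2).+2)%N by lia.
rewrite rng_ext big_cons -cats1 big_cat big_seq1 /=.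
have e1 : bb R (- M%:Z - 1) = h ^+ M.+1.
  rewrite /bb; case: ifP => hh; first by lia.
  by congr (_ ^+ _); lia.
have e2 : bb R (- M%:Z + (2 * M + 2)%N%:Z) = h ^+ M.+1.
  rewrite /bb; case: ifP => hh; last by lia.
  by congr (_ ^+ _); lia.
rewrite e1 e2 addrA; congr (_ + _ + _).
  by case: ifP; case: ifP => //; lia.
by case: ifP; case: ifP => //; lia.
Qed.

Lemma h_ge0 n : 0 <= h ^+ n.
Proof. by apply: exprn_ge0; rewrite invr_ge0; lra. Qed.

Lemma tl_aux K M : (K <= M)%N -> tl K M + 2 * h ^+ M <= 3 * h ^+ K.
Proof.
elim: M => [|M IH] KM.
  have -> : K = 0%N by lia.
  rewrite /tl /rng /= !big_cons big_nil /bb /=; lra.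
rewrite tlS; have hS : h ^+ M.+1 = h ^+ M * h by rewrite exprSr.
have [KM'|KM'] := leqP K M.
  have := IH KM'; rewrite ifT; last by lia.
  rewrite ifT; last by lia.
  rewrite hS; have := h_ge0 M; lra.
have -> : K = M.+1 by lia.
rewrite tl0 // ifF; last by lia.
rewrite ifT; last by lia.
lra.
Qed.

Lemma tl_bound K M : tl K M <= 3 * h ^+ K.
Proof.
have [MK|KM] := ltnP M K.
  by rewrite tl0 //; have := h_ge0 K; lra.
by have := tl_aux K M KM; have := h_ge0 M; lra.
Qed.

End Tail.

Local Open Scope classical_set_scope.
Local Open Scope ring_scope.

Section Lower.
Variable R : realType.
Variable d : nat.
Hypothesis d2 : (2 <= d)%N.
Let d0 : (0 < d)%N. Proof. exact: leq_trans d2. Qed.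
Local Notation F := (seq 'I_d -> int).
Local Notation A n := (adm01 d n).
Local Notation z := (@z R d).
Local Notation x := (@x R d).

Lemma tail_cnt n (K : nat) : ((cnt (A n `&` [set f : F | (K%:Z < `|f [::]|)%R]))%:R : R) =
  \sum_(k <- rng (- n%:Z) (2 * n + 2)) (if K%:Z < `|k| then z n k else 0).
Proof.
set A' := A n `&` _.
have fA' : finite_set A' by apply: finite_setIl; exact: finA.
have -> : A' = A' `&` [set f | f [::] \in rng (- n%:Z) (2 * n + 2)].
  apply/seteqP; split => [f fA|f []//]; split => //=.
  by rewrite mem_rng; have [fA2 _] := fA; have := adm_bound d d0 n f fA2; lia.
rewrite cnt_fibers //; last exact: rng_uniq.
rewrite natr_sum; apply: eq_bigr => k _.
case: ifP => hk.
  rewrite /z /Z /Zs; congr ((cnt _)%:R); apply/seteqP; split => f.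
    by move=> [[fA _] fk]; split.
  by move=> [fA fk]; split => //; split => //=; rewrite fk.
suff -> : A' `&` [set f | f [::] = k] = set0 by rewrite cnt_eq0.
apply/seteqP; split => f // [[_ /= h] fk]; move: hk h; rewrite fk => ->.
by [].
Qed.

Lemma cntA_ge n : z n 1 <= (cnt (A n))%:R.
Proof.
rewrite /z /Z ler_nat; apply: cnt_le; first exact: subIsetl.
exact: finA.
Qed.

Lemma law_sum_ge n r K : 1 - 3 * (2^-1) ^+ K <= \sum_(g <- fset_set (XK d r K)) law R d n r g.
Proof.
rewrite /law -mulr_suml -natr_sum.
have t0 : (0 : R) < (cnt (A n))%:R by apply: lt_le_trans (cntA_ge n); exact: (z1_gt0 _ _ d2).
rewrite ler_pdivlMr //.
have hS := lower_cnt d d2 n r K.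
have hT := split_cnt d d2 n K.
set a := cnt (A n `&` _) in hS hT; set b := cnt (A n `&` [set f : F | (K%:Z < `|f [::]|)%R]) in hT.
set S := (\sum_(g <- _) cnt _)%N in hS *.
have hb : (b%:R : R) <= 3 * (2^-1) ^+ K * (cnt (A n))%:R.
  rewrite /b tail_cnt.
  apply: le_trans (_ : z n 1 * tl R K n <= _).
    rewrite /tl mulr_sumr; apply: ler_sum => k _.
    case: ifP => _; last by rewrite mulr0.
    rewrite (z_x' _ _ d2 n k); apply: (ler_wpM2l (z_ge0 _ _ n 1)).
    exact: x_le_bb.
  rewrite mulrC; apply: ler_pM.
  - by rewrite /tl; apply: sumr_ge0 => k _; case: ifP => _ //; exact: bb_ge0.
  - exact: (z_ge0 _ _ n 1).
  - exact: tl_bound.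
  - exact: cntA_ge.
have eT : ((cnt (A n))%:R : R) = a%:R + b%:R by rewrite hT natrD.
have haS : (a%:R : R) <= S%:R by rewrite ler_nat.
rewrite -/(Nset d n r _); rewrite /Nset in haS.
lra.
Qed.

End Lower.

Local Open Scope classical_set_scope.
Local Open Scope ring_scope.

Theorem theorem1p2 (R : realType) (d : nat) : (2 <= d)%N ->
  forall r : nat, exists p : (seq 'I_d -> int) -> R,
    [/\ (forall g, 0 <= p g),
        (\esum_(g in [set: seq 'I_d -> int]) (p g)%:E = 1%E) &
        (forall g, (fun n : nat => law R d n r g) @ \oo --> p g)].
Proof.
move=> d2 r.
pose p g := lim ((fun n : nat => law R d n r g) @ \oo).
have cv g : (fun n : nat => law R d n r g) @ \oo --> p g := law_cvg R d d2 r g.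
have law0 n g : 0 <= law R d n r g by rewrite /law divr_ge0 // ler0n.
have lim_sum (L : seq (seq 'I_d -> int)) :
    (fun n => \sum_(g <- L) law R d n r g) @ \oo --> \sum_(g <- L) p g.
  elim: L => [|a L IH].
    have -> : (fun n => \sum_(g <- [::]) law R d n r g) = (fun _ => 0).
      by apply/funext => n; rewrite big_nil.
    by rewrite big_nil; exact: cvg_cst.
  have -> : (fun n => \sum_(g <- a :: L) law R d n r g) =
      (fun n => law R d n r a + \sum_(g <- L) law R d n r g).
    by apply/funext => n; rewrite big_cons.
  by rewrite big_cons; apply: cvgD.
have sum_le1 (L : seq (seq 'I_d -> int)) : uniq L -> \sum_(g <- L) p g <= 1.
  move=> uL; have hc := lim_sum L; rewrite -(cvg_lim _ hc) //.
  apply: limr_le; first exact: (cvgP _ hc).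
  by near=> n; apply: law_sum_le1.
have sum_ge K : 1 - 3 * (2^-1) ^+ K <= \sum_(g <- fset_set (XK d r K)) p g.
  have hc := lim_sum (fset_set (XK d r K)); rewrite -(cvg_lim _ hc) //.
  apply: limr_ge; first exact: (cvgP _ hc).
  by near=> n; apply: law_sum_ge.
exists p; split => //.
- move=> g; rewrite -(cvg_lim _ (cv g)) //; apply: limr_ge; first exact: (cvgP _ (cv g)).
  by near=> n; apply: law0.
set E := esum _ _.
have E1 : (E <= 1)%E.
  rewrite /E /esum; apply: ge_ereal_sup => _ [X [finX _] <-].
  rewrite fsbig_finite //= sumEFin lee_fin; apply: sum_le1.
  exact: fset_uniq.
have E0 : (0 <= E)%E by apply: esum_ge0 => g _; rewrite lee_fin -(cvg_lim _ (cv g)) //;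
  apply: limr_ge; [exact: (cvgP _ (cv g))|near=> n; apply: law0].
have Ef : E \is a fin_num by rewrite ge0_fin_numE // (le_lt_trans E1) // ltry.
have EK K : 1 - 3 * (2^-1) ^+ K <= fine E.
  rewrite -lee_fin fineK //; apply: esum_ge; exists (XK d r K).
    by split; [exact: finXK|].
  rewrite fsbig_finite; last exact: finXK.
  rewrite sumEFin lee_fin; exact: sum_ge.
have cE : (fun K : nat => 1 - 3 * (2^-1) ^+ K) @ \oo --> (1 - 3 * 0 : R).
  apply: cvgB; first exact: cvg_cst.
  apply: cvgM; first exact: cvg_cst.
  by apply: cvg_expr; rewrite ger0_norm; lra.
rewrite mulr0 subr0 in cE.
have E1' : 1 <= fine E.
  rewrite -(cvg_lim _ cE) //; apply: limr_le; first exact: (cvgP _ cE).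
  by near=> K; apply: EK.
apply/eqP; rewrite eq_le E1 /=; rewrite -(fineK Ef) lee_fin //.
Unshelve. all: by end_near.
Qed.
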